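(* Let $r\ge 3$ and let $G=K_{n_1,\dots,n_r}$ be a complete $r$-partite graph (all $n_i\ge 1$) of order $n=n_1+\dots+n_r$. Then $\chi_{ei}(G)=1$ if $r=3$ and $G=K_{1,1,1}$; $\chi_{ei}(G)=n-1$ if $r=3$, $n\ge 4$ and $G\in\{K_{n-2,1,1},K_{1,n-2,1},K_{1,1,n-2}\}$; and $\chi_{ei}(G)=n$ otherwise.
   Context: All graphs are finite and simple. A complete $r$-partite graph $K_{n_1,\dots,n_r}$ has its vertex set partitioned into $r$ independent sets of sizes $n_1,\dots,n_r$, with two vertices adjacent if and only if they lie in different parts. A path $P_4$ in $G$ is a sequence $uxyv$ of four distinct vertices with $ux,xy,yv\in E(G)$; $u,v$ are its end vertices. An $e$-injective $k$-coloring of $G$ is a function $f:V(G)\to\{1,\dots,k\}$ with $f(u)\ne f(v)$ whenever $u,v$ are the end vertices of some path $P_4$ in $G$; $\chi_{ei}(G)$ is the least such $k$. *)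

(* Defs.v *)
From mathcomp Require Import all_boot.
Set Implicit Arguments. Unset Strict Implicit. Unset Printing Implicit Defensive.

(* A simple graph: vertex set a finType T, edge relation e (assumed symmetric,
   irreflexive where relevant). *)

Definition P4_ends (T : finType) (e : rel T) (u v : T) : bool :=
  [exists x : T, exists y : T,
     [&& uniq [:: u; x; y; v], e u x, e x y & e y v]].

(* f : T -> 'I_k is an e-injective k-coloring (colors {0..k-1} instead of {1..k}). *)
Definition ei_coloring (T : finType) (e : rel T) (k : nat) (f : T -> 'I_k) : Prop :=
  forall u v : T, P4_ends e u v -> f u != f v.

Definition ei_colorable (T : finType) (e : rel T) (k : nat) : Prop :=
  exists f : T -> 'I_k, ei_coloring e f.

Definition is_chi_ei (T : finType) (e : rel T) (m : nat) : Prop :=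
  ei_colorable e m /\ forall k, ei_colorable e k -> m <= k.

(* Complete r-partite graph K_{n_0,...,n_{r-1}}: vertices are pairs (i, a) with
   a < n i (vertex a in part i); adjacent iff in different parts. *)
Definition cmp_vertex (r : nat) (n : 'I_r -> nat) : finType :=
  {i : 'I_r & 'I_(n i)}.

Definition cmp_adj (r : nat) (n : 'I_r -> nat) : rel (cmp_vertex n) :=
  fun u v => tag u != tag v.

(* Main.v *)
Require Import Defs.
From mathcomp Require Import all_boot.
From mathcomp Require Import zify.

Lemma fresh_ord m (s : seq 'I_m) : size s < m -> exists k, k \notin s.
Proof.
move=> hs; case: (boolP [exists k, k \notin s]) => [/existsP//|/existsPn H].
have: m <= size s.
  rewrite -{1}(card_ord m); apply: leq_trans (card_size s); apply: subset_leq_card.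
  by apply/subsetP=> x _; have:= H x; rewrite negbK.
by rewrite leqNgt hs.
Qed.

Lemma uniq_le m (s : seq 'I_m) : uniq s -> size s <= m.
Proof. by move/card_uniqP <-; apply: leq_trans (max_card _) _; rewrite card_ord. Qed.

Lemma lb (T : finType) (e : rel T) (S : {set T}) k :
  {in S &, forall u v, u != v -> P4_ends e u v} -> ei_colorable e k -> #|S| <= k.
Proof.
move=> H [f hf].
have inj: {in S &, injective f}.
  move=> u v uS vS fuv; apply/eqP; apply/negPn/negP => neq.
  by have := hf u v (H u v uS vS neq); rewrite fuv eqxx.
rewrite -(card_in_imset inj); apply: leq_trans (max_card _) _.
by rewrite card_ord.
Qed.

Lemma ub (T : finType) (e : rel T) (S : {set T}) (g : T -> T) x0 :
  x0 \in S -> (forall x, g x \in S) -> (forall u v, g u = g v -> ~~ P4_ends e u v) ->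
  ei_colorable e #|S|.
Proof.
move=> x0S gS H; exists (fun v => enum_rank_in x0S (g v)).
move=> u v p; apply/negP=> /eqP E.
have: g u = g v by rewrite -(enum_rankK_in x0S (gS u)) E enum_rankK_in.
by move/H; rewrite p.
Qed.

Lemma P4_refl (T : finType) (e : rel T) u : ~~ P4_ends e u u.
Proof.
apply/existsP => [[x /existsP [y /and4P [U _ _ _]]]].
by move: U; rewrite /= !in_cons eqxx !orbT.
Qed.

Lemma card_cmp r (n : 'I_r -> nat) : #|cmp_vertex n| = \sum_(i < r) n i.
Proof.
rewrite /cmp_vertex card_tagged sumnE big_map.
under eq_bigr do rewrite card_ord.
by rewrite big_enum.
Qed.

Lemma tag_neq r (n : 'I_r -> nat) (u v : cmp_vertex n) : tag u != tag v -> u != v.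
Proof. by apply: contra => /eqP ->. Qed.

Lemma idx_neq r (n : 'I_r -> nat) i (a b : 'I_(n i)) :
  a != b -> existT (fun i => 'I_(n i)) i a != existT _ i b.
Proof.
apply: contra => /eqP H; apply/eqP.
exact: (Eqdep_dec.inj_pair2_eq_dec _ (@eq_comparable _) _ _ _ _ H).
Qed.

Lemma single r (n : 'I_r -> nat) (u v : cmp_vertex n) :
  n (tag u) = 1 -> tag u = tag v -> u = v.
Proof.
case: u => i a; case: v => j b /= h e; subst j.
congr existT; apply: val_inj.
case: a => x hx; case: b => y hy /=; move: hx hy; rewrite h; lia.
Qed.

Lemma other r (n : 'I_r -> nat) i (b : 'I_(n i)) : 1 < n i -> exists a : 'I_(n i), a != b.
Proof.
move=> h; have [a Ha] := @fresh_ord (n i) [:: b] h.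
by exists a; move: Ha; rewrite mem_seq1.
Qed.

Lemma some_idx r (n : 'I_r -> nat) i : 0 < n i -> exists a : 'I_(n i), true.
Proof. by move=> h; exists (Ordinal h). Qed.

Lemma mkP4 r (n : 'I_r -> nat) (u x y v : cmp_vertex n) :
  u != x -> u != y -> u != v -> x != y -> x != v -> y != v ->
  tag u != tag x -> tag x != tag y -> tag y != tag v -> P4_ends (@cmp_adj r n) u v.
Proof.
move=> ux uy uv xy xv yv e1 e2 e3.
apply/existsP; exists x; apply/existsP; exists y.
rewrite /cmp_adj e1 e2 e3 /= !inE !negb_or ux uy uv xy xv yv.
done.
Qed.

Ltac neq_hyp := first [ assumption | rewrite eq_sym; assumption ].
Ltac solve_neq := first [ assumption
  | (apply: tag_neq; rewrite /=; neq_hyp)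
  | (apply: idx_neq; neq_hyp)
  | (rewrite /=; neq_hyp) ].

Lemma p4_iff r (n : 'I_r -> nat) (hpos : forall i, 0 < n i) (hr : 3 <= r)
  (u v : cmp_vertex n) :
  P4_ends (@cmp_adj r n) u v =
  (u != v) && ~~ [&& r == 3, tag u != tag v, n (tag u) == 1 & n (tag v) == 1].
Proof.
apply/idP/idP.
  move=> P; have uv : u != v by apply: contraTneq P => ->; exact: P4_refl.
  rewrite uv /=; apply/negP => /and4P [/eqP r3 tuv /eqP nu /eqP nv].
  move: P => /existsP [x /existsP [y /and4P [U e1 e2 e3]]].
  move: U; rewrite /= !inE !negb_or => /and4P [/and3P [ux uy _] /andP [xy xv] yv _].
  rewrite /cmp_adj in e1 e2 e3.
  have xj : tag x != tag v.
    by apply: contra xv => /eqP h; apply/eqP/esym; apply: single => //; rewrite nv.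
  have yi : tag y != tag u.
    by apply: contra uy => /eqP h; apply/eqP; apply: single => //; rewrite h.
  have : uniq [:: tag u; tag v; tag x; tag y].
    by rewrite /= !inE !negb_or tuv e1 e2 (eq_sym (tag u)) yi (eq_sym (tag v)) xj (eq_sym (tag v)) e3.
  by move/uniq_le => /=; move: r3; lia.
case/andP => uv nb.
case: u v uv nb => [i a] [j b] uv nb /=.
have [k1 hk1] := @fresh_ord r [:: i; j] (leq_trans (isT : 2 < 3) hr).
have [a1 _] := @some_idx _ _ k1 (hpos k1).
move: hk1; rewrite !inE negb_or => /andP [k1i k1j].
case: (eqVneq i j) => [eij | nij].
  subst j.
  have [k2 hk2] := @fresh_ord r [:: i; k1] (leq_trans (isT : 2 < 3) hr).
  have [a2 _] := @some_idx _ _ k2 (hpos k2).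
  move: hk2; rewrite !inE negb_or => /andP [k2i k2k1].
  apply: (@mkP4 _ _ _ (existT _ k1 a1) (existT _ k2 a2)); solve_neq.
move: nb; rewrite /= nij /=.
case: (eqVneq r 3) => [r3 | rn3] /=; last first.
  have hr4 : size [:: i; j; k1] < r by rewrite /=; move: hr rn3; lia.
  have [k2 hk2] := @fresh_ord r [:: i; j; k1] hr4.
  have [a2 _] := @some_idx _ _ k2 (hpos k2).
  move: hk2; rewrite !inE !negb_or => /and3P [k2i k2j k2k1] _.
  apply: (@mkP4 _ _ _ (existT _ k1 a1) (existT _ k2 a2)); solve_neq.
rewrite negb_and => /orP [ni | nj].
  have hi : 1 < n i by move: (hpos i) ni; lia.
  have [a' ha'] := @other r n i a hi.
  apply: (@mkP4 _ _ _ (existT _ k1 a1) (existT _ i a')); solve_neq.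
have hj : 1 < n j by move: (hpos j) nj; lia.
have [b' hb'] := @other r n j b hj.
apply: (@mkP4 _ _ _ (existT _ j b') (existT _ k1 a1)); solve_neq.
Qed.

Lemma three r (i j k : 'I_r) : r = 3 -> i != j -> k != i -> k != j ->
  forall l, [|| l == i, l == j | l == k].
Proof.
move=> r3 ij ki kj l; apply/negPn/negP => H.
have : uniq [:: i; j; k; l].
  move: H; rewrite !negb_or => /and3P [li lj lk].
  by rewrite /= !inE !negb_or ij (eq_sym i) ki (eq_sym i) li (eq_sym j) kj
    (eq_sym j) lj (eq_sym k) lk.
by move/uniq_le => /=; move: r3; lia.
Qed.

Theorem proposition3p7 (r : nat) (n : 'I_r -> nat) :
  3 <= r -> (forall i, 0 < n i) ->
  let N := \sum_(i < r) n i in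
  is_chi_ei (@cmp_adj r n)
    (if (r == 3) && [forall i, n i == 1] then 1
     else if [&& r == 3, 4 <= N &
                 [exists j, (n j == N - 2) && [forall i, (i != j) ==> (n i == 1)]]]
     then N - 1
     else N).
Proof.
move=> hr hpos N.
have hN : #|cmp_vertex n| = N by rewrite card_cmp.
have r0 : 0 < r by apply: leq_trans hr.
pose x0 : cmp_vertex n := existT _ (Ordinal r0) (Ordinal (hpos (Ordinal r0))).
case: ifP => [/andP [r3 /forallP all1] | notA].
  split.
    have := @ub _ (@cmp_adj r n) [set x0] (fun _ => x0) x0.
    rewrite cards1; apply; rewrite ?set11 // => u v _.
    rewrite p4_iff //; case: (eqVneq u v) => //= uv.
    rewrite r3 !all1 andbT /=.
    rewrite andbT negbK; apply: contra uv => /eqP e; apply/eqP; exact: (@single _ _ u v (eqP (all1 _)) e).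
  move=> k col; have := @lb _ _ [set x0] _ _ col; rewrite cards1; apply.
  by move=> u v /set1P -> /set1P ->; rewrite eqxx.
case: ifP => [/and3P [r3 N4 /existsP [j /andP [/eqP nj /forallP oth]]] | notB].
  have r3' : r = 3 by apply/eqP.
  have [i1 hi1] := @fresh_ord r [:: j] (leq_trans (isT : 1 < 3) hr).
  have [i2 hi2] := @fresh_ord r [:: j; i1] (leq_trans (isT : 2 < 3) hr).
  move: hi1 hi2; rewrite !inE ?negb_or => i1j /andP [i2j i2i1].
  have i1i2 : i1 != i2 by rewrite eq_sym.
  have ji1 : j != i1 by rewrite eq_sym.
  have ni1 : n i1 = 1 by apply/eqP; have := oth i1; rewrite i1j.
  have ni2 : n i2 = 1 by apply/eqP; have := oth i2; rewrite i2j.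
  pose b : cmp_vertex n := existT _ i1 (Ordinal (hpos i1)).
  pose c : cmp_vertex n := existT _ i2 (Ordinal (hpos i2)).
  have bc : b != c by apply: tag_neq; rewrite /= eq_sym.
  have bad : ~~ P4_ends (@cmp_adj r n) b c.
    by rewrite p4_iff //= r3 i1i2 ni1 ni2 eqxx andbF.
  have hS : #|[set~ c]| = N - 1 by rewrite cardsC1 hN subn1.
  split.
    rewrite -hS.
    apply: (@ub _ _ _ (fun v => if v == c then b else v) b).
    - by rewrite !inE.
    - by move=> x; case: eqP => [_|/eqP]; rewrite !inE.
    move=> u v; case: (eqVneq u c) => [->|uc]; case: (eqVneq v c) => [->|vc]; rewrite ?eqxx ?(negbTE uc) ?(negbTE vc).
    - by move=> _; apply: P4_refl.
    - by move=> <-; rewrite p4_iff //= r3 i2i1 ni1 ni2 eqxx andbF.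
    - by move=> ->.
    - by move=> ->; apply: P4_refl.
  move=> k col; rewrite -hS; apply: (@lb _ _ _ _ _ col).
  move=> u v; rewrite !inE => uc vc uv.
  rewrite p4_iff // uv /=; apply/negP => /and4P [_ tuv /eqP nu /eqP nv].
  have tw (w : cmp_vertex n) : w != c -> n (tag w) = 1 -> tag w = i1.
    move=> wc nw; have := @three _ j i1 i2 r3' ji1 i2j i2i1 (tag w).
    case/or3P => /eqP e //.
      by move: nw; rewrite e nj; move: N4; lia.
    by move: wc; rewrite (@single _ _ w c nw e) eqxx.
  by move: tuv; rewrite (tw u uc nu) (tw v vc nv) eqxx.
have hT : #|[set: cmp_vertex n]| = N by rewrite cardsT.
split.
  rewrite -hT; apply: (@ub _ _ _ id x0) => //.
  by move=> u v /= ->; apply: P4_refl.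
move=> k col; rewrite -hT; apply: (@lb _ _ _ _ _ col).
move=> u v _ _ uv.
rewrite p4_iff // uv /=; apply/negP => /and4P [r3 tuv /eqP nu /eqP nv].
have r3' : r = 3 by apply/eqP.
have [k0 hk] := @fresh_ord r [:: tag u; tag v] (leq_trans (isT : 2 < 3) hr).
move: hk; rewrite !inE negb_or => /andP [ku kv].
have all3 := @three _ (tag u) (tag v) k0 r3' tuv ku kv.
have hsum : N = 2 + n k0.
  rewrite /N (bigD1 (tag u)) //= (bigD1 (tag v)) /=; last by rewrite eq_sym.
  rewrite (bigD1 k0) /=; last by rewrite ku kv.
  rewrite big1 ?nu ?nv ?addn0 //.
  move=> l /andP [/andP [lu lv] lk].
  by have := all3 l; rewrite (negbTE lu) (negbTE lv) (negbTE lk).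
case: (eqVneq (n k0) 1) => nk.
  move: notA; rewrite r3 /=; move/negbT/negP; apply; apply/forallP => l.
  by case/or3P: (all3 l) => /eqP ->; apply/eqP.
move: notB; rewrite r3 /=; move/negbT/negP; apply; apply/andP; split.
  by move: nk (hpos k0); rewrite hsum; lia.
apply/existsP; exists k0; rewrite hsum; apply/andP; split; first by apply/eqP; lia.
apply/forallP => l; apply/implyP => lk.
by case/or3P: (all3 l) => /eqP e; rewrite e ?nu ?nv //; move: lk; rewrite e eqxx.
Qed.
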